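(* Let $p,q,r$ be probability distributions on a finite alphabet $\mathcal{X}$ and let $\mu_q=\min_{x\in\mathcal{X}}q(x)$. Then $$\mathbb{D}(p\|q)\le\log\Big(\frac1{\mu_q}\Big)\sqrt{2\ln2}\Big[\sqrt{\min(\mathbb{D}(p\|r),\mathbb{D}(r\|p))}+\sqrt{\min(\mathbb{D}(q\|r),\mathbb{D}(r\|q))}\Big].$$
   Context: $\log$ is base 2 and $\ln$ is the natural logarithm; $\mathbb{D}(p\|q)=\sum_xp(x)\log\frac{p(x)}{q(x)}$ is the Kullback–Leibler divergence, with the convention $\mathbb{D}(p\|q)=+\infty$ if $p(x)>0=q(x)$ for some $x$ (the inequality being trivial when some quantity is infinite). *)

(* Defs.v *)
(* classical reals. Alphabet = {0,...,n-1} with n >= 1. *)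
From Stdlib Require Import Reals Lra Lia List.
Import ListNotations.
Open Scope R_scope.

Definition sumR (n : nat) (f : nat -> R) : R :=
  fold_right Rplus 0 (map f (seq 0 n)).

Definition is_dist (n : nat) (p : nat -> R) : Prop :=
  (forall i, (i < n)%nat -> 0 <= p i) /\ sumR n p = 1.

Definition log2 (x : R) : R := ln x / ln 2.

Definition mu (n : nat) (q : nat -> R) : R :=
  fold_right Rmin (q 0%nat) (map q (seq 0 n)).

(* Extended nonnegative values: None stands for +infinity. *)
Definition ext := option R.

Definition ext_min (x y : ext) : ext :=
  match x, y with
  | Some a, Some b => Some (Rmin a b)
  | Some a, None => Some a
  | None, y => y
  end.

(* KL divergence D(p||q) = sum_x p(x) log(p(x)/q(x)), with 0 log(0/q)=0,
   and +infinity (None) if p(x) > 0 = q(x) for some x. *)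
Definition KL (n : nat) (p q : nat -> R) : ext :=
  if existsb (fun i => if Rlt_dec 0 (p i) then
                         (if Req_EM_T (q i) 0 then true else false)
                       else false) (seq 0 n)
  then None
  else Some (sumR n (fun i => if Rlt_dec 0 (p i)
                              then p i * log2 (p i / q i) else 0)).

(* Main.v *)
Require Import Defs.
From Stdlib Require Import Reals Lra Lia List.
From Coquelicot Require Import Coquelicot.
Open Scope R_scope.

Lemma fr_shift (l : list R) c : fold_right Rplus c l = fold_right Rplus 0 l + c.
Proof. induction l; simpl; [lra|rewrite IHl; lra]. Qed.

Lemma sumR_S n f : sumR (S n) f = sumR n f + f n.
Proof. unfold sumR. rewrite seq_S, map_app, fold_right_app. simpl. rewrite fr_shift. lra. Qed.

Lemma sumR_0 f : sumR 0 f = 0.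
Proof. reflexivity. Qed.

Lemma sumR_le n f g : (forall i, (i < n)%nat -> f i <= g i) -> sumR n f <= sumR n g.
Proof. induction n; intros H. rewrite !sumR_0; lra.
 rewrite !sumR_S. assert (f n <= g n) by (apply H; lia).
 assert (sumR n f <= sumR n g) by (apply IHn; intros; apply H; lia). lra. Qed.

Lemma sumR_ext n f g : (forall i, (i < n)%nat -> f i = g i) -> sumR n f = sumR n g.
Proof. intros H. apply Rle_antisym; apply sumR_le; intros; rewrite H; auto; lra. Qed.

Lemma sumR_lin n a b f g : sumR n (fun i => a * f i + b * g i) = a * sumR n f + b * sumR n g.
Proof. induction n. rewrite !sumR_0; lra. rewrite !sumR_S, IHn; lra. Qed.

Lemma sumR_nonneg n f : (forall i, (i < n)%nat -> 0 <= f i) -> 0 <= sumR n f.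
Proof. intros H. replace 0 with (sumR n (fun _ => 0)). apply sumR_le; auto.
 induction n; [reflexivity| rewrite sumR_S, IHn; [lra| intros; apply H; lia]]. Qed.

Lemma sumR_term n f j : (forall i, (i < n)%nat -> 0 <= f i) -> (j < n)%nat -> f j <= sumR n f.
Proof. induction n; intros H Hj. lia. rewrite sumR_S.
 destruct (Nat.eq_dec j n). subst. assert (0 <= sumR n f) by (apply sumR_nonneg; intros; apply H; lia). lra.
 assert (f j <= sumR n f) by (apply IHn; [intros; apply H; lia| lia]).
 assert (0 <= f n) by (apply H; lia). lra. Qed.
Lemma ln_le_xm1 x : 0 < x -> ln x <= x - 1.
Proof. intro H. pose proof (exp_ineq1_le (ln x)). rewrite exp_ln in H0 by lra. lra. Qed.

Lemma ln_div' x y : 0 < x -> 0 < y -> ln (x / y) = ln x - ln y.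
Proof. intros. unfold Rdiv. rewrite ln_mult, ln_Rinv; try lra. apply Rinv_0_lt_compat; lra. Qed.

Lemma claim1 t q : 0 < q -> q < 1 -> q <= t <= 1 ->
  t * (ln t - ln q) * (1 - q) <= (t - q) * (- ln q).
Proof.
  intros Hq Hq1 Ht.
  assert (H1 : ln t <= t - 1) by (apply ln_le_xm1; lra).
  assert (H2 : ln q - ln t <= q/t - 1) by (rewrite <- ln_div' by lra; apply ln_le_xm1; apply Rdiv_lt_0_compat; lra).
  assert (H3 : ln t - ln q <= t/q - 1) by (rewrite <- ln_div' by lra; apply ln_le_xm1; apply Rdiv_lt_0_compat; lra).
  assert (E: (t - q) * (- ln q) - t * (ln t - ln q) * (1 - q)
             = (t - q) * (- ln t) + ((1 - t) * q) * (ln q - ln t)) by ring.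
  assert (A1 : (t - q) * (1 - t) <= (t - q) * (- ln t)) by (apply Rmult_le_compat_l; lra).
  assert (A2 : ((1 - t) * q) * (1 - t/q) <= ((1 - t) * q) * (ln q - ln t)).
  { apply Rmult_le_compat_l. apply Rmult_le_pos; lra. lra. }
  assert (E2 : ((1 - t) * q) * (1 - t/q) = (1-t)*(q-t)) by (field; lra).
  lra.
Qed.

Lemma claim2 q m : 0 < m -> m < 1 -> m <= q -> q <= 1 ->
  (1 - m) * (- ln q) <= (1 - q) * (- ln m).
Proof.
  intros Hm Hm1 Hmq Hq1.
  assert (H1 : ln m - ln q <= m/q - 1) by (rewrite <- ln_div' by lra; apply ln_le_xm1; apply Rdiv_lt_0_compat; lra).
  assert (H2 : - ln q <= 1/q - 1) by (rewrite <- ln_Rinv by lra; rewrite <- (Rmult_1_l (/ q)); apply ln_le_xm1; apply Rdiv_lt_0_compat; lra).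
  assert (E : (1 - q) * (- ln m) - (1 - m) * (- ln q) = (1-q) * (ln q - ln m) + (q - m) * ln q) by ring.
  assert (A1 : (1-q) * (1 - m/q) <= (1-q) * (ln q - ln m)) by (apply Rmult_le_compat_l; lra).
  assert (A2 : (q - m) * (1 - 1/q) <= (q - m) * ln q) by (apply Rmult_le_compat_l; lra).
  assert (E2 : (1-q) * (1 - m/q) + (q - m) * (1 - 1/q) = 0) by (field; lra).
  lra.
Qed.

Lemma stepA_term t q m : 0 <= t <= 1 -> m <= q <= 1 -> 0 < m <= 1/2 ->
  (1 - m) * (if Rlt_dec 0 t then t * ln (t / q) else 0)
   <= ln (1 / m) * (m * (t - q) + (1 - m) * Rabs (t - q)).
Proof.
  intros Ht Hq Hm.
  assert (Lm : ln (1/m) = - ln m) by (unfold Rdiv; rewrite Rmult_1_l, ln_Rinv; lra).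
  assert (Lpos : 0 <= - ln m).
  { assert (ln m <= m - 1) by (apply ln_le_xm1; lra). lra. }
  rewrite Lm.
  destruct (Rlt_dec 0 t) as [Ht0|Ht0].
  - rewrite ln_div' by lra.
    destruct (Rle_dec q t) as [Hqt|Hqt].
    + rewrite Rabs_right by lra.
      destruct (Req_dec q 1) as [Hq1|Hq1].
      * subst q. assert (t = 1) by lra. subst t. rewrite ln_1. lra.
      * pose proof (claim1 t q ltac:(lra) ltac:(lra) ltac:(lra)) as C1.
        pose proof (claim2 q m ltac:(lra) ltac:(lra) ltac:(lra) ltac:(lra)) as C2.
        (* (1-m) T (1-q) <= (t-q)(1-m)(-lq) <= (t-q)(1-q)(-lm) *)
        assert (B : (1 - m) * (t * (ln t - ln q)) * (1 - q) <= (- ln m) * (t - q) * (1 - q)).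
        { apply Rle_trans with ((t - q) * ((1 - m) * (- ln q))).
          - replace ((1 - m) * (t * (ln t - ln q)) * (1 - q)) with ((1-m) * (t * (ln t - ln q) * (1 - q))) by ring.
            replace ((t - q) * ((1 - m) * - ln q)) with ((1-m) * ((t - q) * - ln q)) by ring.
            apply Rmult_le_compat_l; lra.
          - replace ((- ln m) * (t - q) * (1 - q)) with ((t-q) * ((1 - q) * (- ln m))) by ring.
            apply Rmult_le_compat_l; lra. }
        apply Rmult_le_reg_r with (1 - q). lra.
        replace (- ln m * (m * (t - q) + (1 - m) * (t - q)) * (1 - q)) with (- ln m * (t - q) * (1 - q)) by ring.
        exact B.
    + rewrite Rabs_left by lra.
      assert (ln t - ln q < 0) by (pose proof (ln_increasing t q Ht0 ltac:(lra)); lra).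
      assert (t * (ln t - ln q) <= 0) by (assert (0 <= t * (-(ln t - ln q))) by (apply Rmult_le_pos; lra); lra).
      assert (0 <= - ln m * ((q - t) * (1 - 2 * m))) by (apply Rmult_le_pos; [lra| apply Rmult_le_pos; lra]).
      assert (0 <= (1 - m) * - (t * (ln t - ln q))) by (apply Rmult_le_pos; lra).
      replace (- ln m * (m * (t - q) + (1 - m) * - (t - q))) with (- ln m * ((q - t) * (1 - 2 * m))) by ring.
      lra.
  - assert (t = 0) by lra. subst t. rewrite Rabs_left1 by lra.
    replace (- ln m * (m * (0 - q) + (1 - m) * - (0 - q))) with (- ln m * (q * (1 - 2 * m))) by ring.
    assert (0 <= - ln m * (q * (1 - 2 * m))) by (apply Rmult_le_pos; [lra| apply Rmult_le_pos; lra]).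
    lra.
Qed.
Definition gk (u : R) := (u - 1) / u + 3 * (u - 1)^2 / (2 * u * (u + 2)).
Definition Gk (u : R) := ln u - gk u.

Lemma Gk_deriv u : 0 < u -> is_derive Gk u ((u-1)^3 / (u^2 * (u+2)^2)).
Proof.
  intro Hu. unfold Gk, gk.
  auto_derive.
  - repeat split; try lra; try (apply Rgt_not_eq || idtac); nra.
  - field. split; lra.
Qed.

Lemma key_ln u : 0 < u -> gk u <= ln u.
Proof.
  intro Hu.
  assert (G1 : Gk 1 = 0). { unfold Gk, gk. rewrite ln_1. field. }
  destruct (MVT_gen Gk 1 u (fun u => (u-1)^3 / (u^2 * (u+2)^2))) as [c [Hc Heq]].
  - intros x Hx. apply Gk_deriv.
    assert (0 < Rmin 1 u) by (apply Rmin_glb_lt; lra). lra.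
  - intros x Hx. apply continuity_pt_filterlim.
    apply (ex_derive_continuous Gk x).
    eexists. apply Gk_deriv.
    assert (0 < Rmin 1 u) by (apply Rmin_glb_lt; lra). lra.
  - assert (0 < Rmin 1 u) by (apply Rmin_glb_lt; lra).
    assert (Hc0 : 0 < c) by lra.
    assert (0 <= (c-1)^3 / (c^2 * (c+2)^2) * (u - 1)).
    { unfold Rdiv. rewrite Rmult_comm, <- Rmult_assoc.
      apply Rmult_le_pos.
      - destruct (Rle_dec 1 u).
        + rewrite Rmin_left in Hc by lra. rewrite Rmax_right in Hc by lra.
          apply Rmult_le_pos; [lra| apply pow_le; lra].
        + rewrite Rmin_right in Hc by lra. rewrite Rmax_left in Hc by lra.
          replace ((u-1) * (c-1)^3) with ((1-u)*(1-c)^3) by ring.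
          apply Rmult_le_pos; [lra| apply pow_le; lra].
      - left. apply Rinv_0_lt_compat. apply Rmult_lt_0_compat; apply pow_lt; lra. }
    unfold Gk in *. lra.
Qed.

Lemma sumR_add n f g : sumR n (fun i => f i + g i) = sumR n f + sumR n g.
Proof. rewrite <- (Rmult_1_l (sumR n f)), <- (Rmult_1_l (sumR n g)), <- sumR_lin.
 apply sumR_ext; intros; ring. Qed.

Lemma sumR_scal n c f : sumR n (fun i => c * f i) = c * sumR n f.
Proof. replace (c * sumR n f) with (c * sumR n f + 0 * sumR n f) by ring.
 rewrite <- sumR_lin. apply sumR_ext; intros; ring. Qed.

Lemma sumR_prefix k n f : (k <= n)%nat -> (forall i, (i < n)%nat -> 0 <= f i) -> sumR k f <= sumR n f.
Proof. induction n; intros Hk H. assert (k = 0%nat) by lia. subst; lra.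
 destruct (Nat.eq_dec k (S n)). subst; lra.
 rewrite sumR_S. assert (sumR k f <= sumR n f) by (apply IHn; [lia| intros; apply H; lia]).
 assert (0 <= f n) by (apply H; lia). lra. Qed.

Lemma pins_term x y : 0 <= x -> 0 <= y -> (0 < x -> 0 < y) ->
  3 * (x - y)^2 / (2 * x + 4 * y) <= (if Rlt_dec 0 x then x * ln (x / y) else 0) - x + y.
Proof.
  intros Hx Hy Hxy. destruct (Rlt_dec 0 x) as [Hx0|Hx0].
  - assert (Hy0 := Hxy Hx0).
    pose proof (key_ln (x / y) ltac:(apply Rdiv_lt_0_compat; lra)) as K.
    assert (x * gk (x / y) <= x * ln (x / y)) by (apply Rmult_le_compat_l; lra).
    assert (E : x * gk (x / y) = (x - y) + 3 * (x - y)^2 / (2 * x + 4 * y)).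
    { unfold gk. field. repeat split; try lra. }
    lra.
  - assert (x = 0) by lra. subst x.
    destruct (Req_dec y 0). subst. unfold Rdiv. replace (2*0+4*0) with 0 by ring. rewrite Rinv_0. lra.
    replace (3 * (0 - y) ^ 2 / (2 * 0 + 4 * y)) with (3/4 * y) by (field; lra). lra.
Qed.

Lemma cs_term x y lam : 0 <= x -> 0 <= y -> 0 <= lam ->
  2 * lam * Rabs (x - y) <= (x - y)^2 / (2 * x + 4 * y) + lam^2 * (2 * x + 4 * y).
Proof.
  intros Hx Hy Hl.
  destruct (Req_dec (2 * x + 4 * y) 0) as [Hw|Hw].
  - assert (x = 0) by lra. assert (y = 0) by lra. subst.
    rewrite Hw. replace (0 - 0) with 0 by ring. rewrite Rabs_R0. unfold Rdiv. rewrite Rinv_0. lra.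
  - assert (Hw' : 0 < 2 * x + 4 * y) by lra.
    set (w := 2 * x + 4 * y) in *.
    apply Rmult_le_reg_r with w. exact Hw'.
    replace (((x - y) ^ 2 / w + lam ^ 2 * w) * w) with ((x-y)^2 + (lam*w)^2) by (field; lra).
    pose proof (pow2_abs (x - y)) as PA.
    pose proof (Rabs_pos (x - y)).
    rewrite <- PA.
    pose proof (pow2_ge_0 (Rabs (x - y) - lam * w)). nra.
Qed.

Definition L1 n (x y : nat -> R) := sumR n (fun i => Rabs (x i - y i)).
Definition Tn n (x y : nat -> R) := sumR n (fun i => if Rlt_dec 0 (x i) then x i * ln (x i / y i) else 0).

Lemma KL_some n x y e : (forall i, (i < n)%nat -> 0 <= y i) -> KL n x y = Some e ->
  (forall i, (i < n)%nat -> 0 < x i -> 0 < y i) /\ e = Tn n x y / ln 2.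
Proof.
  intros Hy H. unfold KL in H.
  destruct (existsb _ (seq 0 n)) eqn:E; [discriminate|]. injection H as H. split.
  - intros i Hi Hx. destruct (Req_dec (y i) 0) as [Hz|Hz].
    + exfalso. assert (true = false); [|discriminate]. rewrite <- E. symmetry. apply (proj2 (existsb_exists _ _)).
      exists i. split. apply in_seq; lia.
      destruct (Rlt_dec 0 (x i)); [|lra]. destruct (Req_dec_T (y i) 0); [reflexivity|lra].
    + specialize (Hy i Hi). lra.
  - subst e. unfold Tn. unfold Rdiv at 2. rewrite Rmult_comm, <- sumR_scal. apply sumR_ext.
    intros i _. unfold log2. destruct (Rlt_dec 0 (x i)); unfold Rdiv; ring.
Qed.

Lemma ln2_pos : 0 < ln 2.
Proof. pose proof ln_lt_2. lra. Qed.

Lemma pinsker_nat n x y : is_dist n x -> is_dist n y -> (forall i, (i < n)%nat -> 0 < x i -> 0 < y i) ->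
  (L1 n x y)^2 <= 2 * Tn n x y.
Proof.
  intros [Hx Sx] [Hy Sy] Hxy.
  set (S := sumR n (fun i => (x i - y i)^2 / (2 * x i + 4 * y i))).
  assert (HS : 3 * S <= Tn n x y).
  { assert (3 * S <= sumR n (fun i => (if Rlt_dec 0 (x i) then x i * ln (x i / y i) else 0) + (-1 * x i + 1 * y i))).
    { unfold S. rewrite <- sumR_scal. apply sumR_le. intros i Hi.
      pose proof (pins_term (x i) (y i) (Hx i Hi) (Hy i Hi) (Hxy i Hi)). unfold Rdiv in *. lra. }
    rewrite sumR_add, sumR_lin, Sx, Sy in H. unfold Tn. lra. }
  set (lam := L1 n x y / 6).
  assert (HL : 0 <= L1 n x y) by (apply sumR_nonneg; intros; apply Rabs_pos).
  assert (Hl : 0 <= lam) by (unfold lam; lra).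
  assert (C : 2 * lam * L1 n x y <= S + lam^2 * 6).
  { unfold L1. rewrite <- sumR_scal.
    replace 6 with (2 * sumR n x + 4 * sumR n y) by (rewrite Sx, Sy; ring).
    rewrite <- sumR_lin, <- sumR_scal. unfold S. rewrite <- sumR_add. apply sumR_le.
    intros i Hi. apply cs_term; auto. }
  unfold lam in C. nra.
Qed.

Lemma pinsker_bits n x y e : is_dist n x -> is_dist n y -> KL n x y = Some e ->
  L1 n x y <= sqrt (2 * ln 2) * sqrt e.
Proof.
  intros Dx Dy H. pose proof Dy as [Hy _].
  destruct (KL_some n x y e Hy H) as [Hxy He].
  pose proof (pinsker_nat n x y Dx Dy Hxy) as P.
  pose proof ln2_pos.
  assert (Tn n x y = e * ln 2) by (subst e; field; lra).
  rewrite <- sqrt_mult_alt by lra.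
  assert (HL : 0 <= L1 n x y) by (apply sumR_nonneg; intros; apply Rabs_pos).
  rewrite <- (sqrt_square (L1 n x y)) by lra. apply sqrt_le_1_alt. nra.
Qed.

Lemma L1_sym n x y : L1 n x y = L1 n y x.
Proof. apply sumR_ext. intros. apply Rabs_minus_sym. Qed.

Lemma L1_tri n x y z : L1 n x z <= L1 n x y + L1 n y z.
Proof. unfold L1. rewrite <- sumR_add. apply sumR_le. intros.
 replace (x i - z i) with ((x i - y i) + (y i - z i)) by ring. apply Rabs_triang. Qed.

Lemma min_bound n x y a : is_dist n x -> is_dist n y ->
  ext_min (KL n x y) (KL n y x) = Some a -> L1 n x y <= sqrt (2 * ln 2) * sqrt a.
Proof.
  intros Dx Dy H.
  destruct (KL n x y) as [e1|] eqn:E1; destruct (KL n y x) as [e2|] eqn:E2; simpl in H; try discriminate;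
    injection H as H; subst a.
  - pose proof (pinsker_bits n x y e1 Dx Dy E1). pose proof (pinsker_bits n y x e2 Dy Dx E2).
    rewrite L1_sym in H0. destruct (Rle_dec e1 e2).
    + rewrite Rmin_left by lra. auto.
    + rewrite Rmin_right by lra. auto.
  - apply (pinsker_bits n x y e1 Dx Dy E1).
  - rewrite L1_sym. apply (pinsker_bits n y x e2 Dy Dx E2).
Qed.

Lemma fold_min_le (q : nat -> R) c l : fold_right Rmin c (map q l) <= c /\
  forall i, In i l -> fold_right Rmin c (map q l) <= q i.
Proof.
  induction l as [|j l IH]; simpl. split; [lra| tauto].
  destruct IH as [IH1 IH2]. split.
  - apply Rle_trans with (fold_right Rmin c (map q l)); [apply Rmin_r| lra].
  - intros i [<-|Hi]. apply Rmin_l. apply Rle_trans with (fold_right Rmin c (map q l)); [apply Rmin_r| auto].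
Qed.

Lemma fold_min_pos (q : nat -> R) c l : 0 < c -> (forall i, In i l -> 0 < q i) -> 0 < fold_right Rmin c (map q l).
Proof.
  intros Hc. induction l as [|j l IH]; simpl; intros H. lra.
  apply Rmin_glb_lt. apply H; auto. apply IH. intros; apply H; auto.
Qed.

Lemma mu_le n q i : (i < n)%nat -> mu n q <= q i.
Proof. intros. apply (fold_min_le q (q 0%nat) (seq 0 n)). apply in_seq. lia. Qed.

Lemma mu_pos n q : (forall i, (i < n)%nat -> 0 < q i) -> (1 <= n)%nat -> 0 < mu n q.
Proof. intros H Hn. apply fold_min_pos. apply H; lia. intros i Hi. apply in_seq in Hi. apply H; lia. Qed.

Lemma dist_le1 n x i : is_dist n x -> (i < n)%nat -> x i <= 1.
Proof. intros [H S] Hi. rewrite <- S. apply sumR_term; auto. Qed.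

Lemma stepA n p q d : (2 <= n)%nat -> is_dist n p -> is_dist n q ->
  (forall i, (i < n)%nat -> 0 < q i) -> KL n p q = Some d ->
  d <= log2 (1 / mu n q) * L1 n p q.
Proof.
  intros Hn Dp Dq Hq H.
  pose proof Dq as [Hq0 Sq]. pose proof Dp as [Hp0 Sp].
  destruct (KL_some n p q d Hq0 H) as [_ Hd].
  set (m := mu n q).
  assert (Hm0 : 0 < m) by (apply mu_pos; auto; lia).
  assert (Hm2 : m <= 1/2).
  { assert (m <= q 0%nat) by (apply mu_le; lia). assert (m <= q 1%nat) by (apply mu_le; lia).
    assert (sumR 2 q <= sumR n q) by (apply sumR_prefix; auto).
    rewrite !sumR_S, sumR_0 in H2. lra. }
  assert (A : (1 - m) * Tn n p q <= ln (1/m) * (m * (sumR n p) + (-m) * sumR n q + (1 - m) * L1 n p q)).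
  { unfold Tn, L1. rewrite <- sumR_scal.
    replace (m * sumR n p + - m * sumR n q) with (sumR n (fun i => m * p i + (-m) * q i)) by apply sumR_lin.
    rewrite <- sumR_scal, <- sumR_add, <- sumR_scal. apply sumR_le. intros i Hi.
    replace (ln (1 / m) * (m * p i + - m * q i + (1 - m) * Rabs (p i - q i)))
      with (ln (1 / m) * (m * (p i - q i) + (1 - m) * Rabs (p i - q i))) by ring.
    apply stepA_term.
    - split; [auto| apply (dist_le1 n p i Dp Hi)].
    - split; [apply mu_le; auto| apply (dist_le1 n q i Dq Hi)].
    - lra. }
  rewrite Sp, Sq in A.
  replace (ln (1 / m) * (m * 1 + - m * 1 + (1 - m) * L1 n p q)) with ((1 - m) * (ln (1/m) * L1 n p q)) in A by ring.
  apply Rmult_le_reg_l in A; [|lra].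
  rewrite Hd. unfold log2. pose proof ln2_pos.
  apply Rmult_le_reg_r with (ln 2); auto.
  replace (Tn n p q / ln 2 * ln 2) with (Tn n p q) by (field; lra).
  replace (ln (1 / m) / ln 2 * L1 n p q * ln 2) with (ln (1/m) * L1 n p q) by (field; lra).
  exact A.
Qed.

Theorem lemma16 (n : nat) (p q r : nat -> R) :
  (1 <= n)%nat ->
  is_dist n p -> is_dist n q -> is_dist n r ->
  (forall i, (i < n)%nat -> 0 < q i) ->
  forall d a b : R,
    KL n p q = Some d ->
    ext_min (KL n p r) (KL n r p) = Some a ->
    ext_min (KL n q r) (KL n r q) = Some b ->
    d <= log2 (1 / mu n q) * sqrt (2 * ln 2) * (sqrt a + sqrt b).
Proof.
  intros Hn Dp Dq Dr Hq d a b Hd Ha Hb.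
  pose proof (min_bound n p r a Dp Dr Ha) as Pa.
  pose proof (min_bound n q r b Dq Dr Hb) as Pb.
  rewrite L1_sym in Pb.
  pose proof (L1_tri n p r q) as T.
  assert (Hm0 : 0 < mu n q) by (apply mu_pos; auto).
  assert (Hm1 : mu n q <= 1) by (apply Rle_trans with (q 0%nat); [apply mu_le; lia| apply (dist_le1 n q 0 Dq); lia]).
  assert (Lb : 0 <= log2 (1 / mu n q)).
  { unfold log2. pose proof ln2_pos. apply Rdiv_le_0_compat; auto.
    unfold Rdiv. rewrite Rmult_1_l, ln_Rinv by lra.
    assert (ln (mu n q) <= mu n q - 1) by (apply ln_le_xm1; lra). lra. }
  assert (Hd' : d <= log2 (1 / mu n q) * L1 n p q).
  { destruct (Nat.eq_dec n 1) as [E|E].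
    - subst n. destruct Dp as [Hp0 Sp]. destruct Dq as [Hq0 Sq].
      destruct (KL_some 1 p q d Hq0 Hd) as [_ ->].
      unfold sumR in Sp, Sq; simpl in Sp, Sq.
      assert (p 0%nat = 1) by lra. assert (q 0%nat = 1) by lra.
      unfold Tn, L1, sumR; simpl. rewrite H, H0.
      destruct (Rlt_dec 0 1); [|lra]. replace (1/1) with 1 by field. rewrite ln_1.
      replace (1 - 1) with 0 by ring. rewrite Rabs_R0. unfold Rdiv. ring_simplify. lra.
    - apply stepA; auto; lia. }
  assert (L1 n p q <= sqrt (2 * ln 2) * (sqrt a + sqrt b)) by lra.
  apply Rle_trans with (log2 (1 / mu n q) * L1 n p q); auto.
  rewrite Rmult_assoc. apply Rmult_le_compat_l; auto.
Qed.
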